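(* Let $\Omega := \{0,1\}^{\mathbb{Z}}$, let $\tau:\Omega\to\Omega$ be the shift $(\tau\omega)(x) := \omega(x-1)$, and let $T:\mathbb{Z}\to\mathbb{Z}$ be $Tx:=x+1$. Let $\Delta\notin\mathbb{Z}$ be an extra symbol and set $T(\Delta):=\Delta$. Then there exists a function $X:\Omega\to\mathbb{Z}\cup\{\Delta\}$ such that $X^{-1}\{\Delta\}$ is countable and $X(\tau\omega)=T(X(\omega))$ for all $\omega\in\Omega$.
   Context: The axiom of choice (equivalently, the well-ordering principle) is assumed. *)

(* Defs.v *)
From HB Require Import structures.
From mathcomp Require Import all_boot all_order all_algebra.
From mathcomp Require Import boolp classical_sets functions cardinality.
Set Implicit Arguments. Unset Strict Implicit. Unset Printing Implicit Defensive.
Import Order.TTheory GRing.Theory Num.Theory.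
Local Open Scope ring_scope.

Definition Omega := int -> bool.

Definition tau (w : Omega) : Omega := fun x => w (x - 1).

Definition Delta : option int := None.

Definition T (z : option int) : option int :=
  match z with Some x => Some (x + 1) | None => None end.

(* Main.v *)
Require Import Defs.
From mathcomp Require Import all_boot all_order all_algebra.
From mathcomp Require Import boolp classical_sets functions cardinality.
Local Open Scope classical_set_scope.
Import Order.TTheory GRing.Theory Num.Theory.
From mathcomp Require Import intdiv.
From mathcomp Require Import ring.

Local Open Scope ring_scope.

Definition sh (k : int) (w : Omega) : Omega := fun x => w (x - k).

Lemma shM k j w : sh k (sh j w) = sh (k + j) w.
Proof. apply: funext => x; rewrite /sh; congr w; ring. Qed.

Lemma sh0 w : sh 0 w = w.
Proof. by apply: funext => x; rewrite /sh subr0. Qed.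

Lemma tau_sh w : tau w = sh 1 w. Proof. by []. Qed.

Definition periodic (w : Omega) := exists k : int, k != 0 /\ sh k w = w.

Lemma per_nat {w : Omega} {k : int} : sh k w = w ->
  forall (n : nat) x, w (x + k *+ n) = w x.
Proof.
move=> hk n; elim: n => [|n IH] x; first by rewrite mulr0n addr0.
have := congr1 (fun f => f (x + k *+ n.+1)) hk; rewrite /sh => <-.
by rewrite -[RHS]IH; congr w; rewrite mulrS (addrC k) addrA addrK.
Qed.

Lemma per_int {w : Omega} {k : int} : sh k w = w ->
  forall (q : int) x, w (x + q * k) = w x.
Proof.
move=> hk q x; case: q => n.
  by rewrite -(per_nat hk n x) -mulr_natl natz.
rewrite NegzE mulNr.
rewrite -[in RHS](subrK ((n.+1)%:Z * k) x) -(per_nat hk n.+1 (x - n.+1%:Z * k)).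
congr w; rewrite -mulr_natl natz; ring.
Qed.

Definition code (p : nat * seq bool) : Omega :=
  fun x => nth false p.2 (absz (x %% (p.1.+1)%:Z)%Z).

Lemma periodic_countable : countable periodic.
Proof.
apply: (@sub_countable _ _ _ (code @` setT)); last first.
  apply: card_le_trans (card_image_le _ _) _; exact: countableP.
apply: subset_card_le => w [k [k0 hk]].
have [n hn] : exists n : nat, sh (n.+1)%:Z w = w.
  case: k k0 hk => [[|n]|n] // _ hk; first by exists n.
  exists n; rewrite -[in LHS]hk shM NegzE addrN sh0 //.
exists (n, [seq w i%:Z | i <- iota 0 n.+1]) => //.
apply: funext => x; rewrite /code; change (nth false [seq w i%:Z | i <- iota 0 n.+1] `|(x %% (n.+1)%:Z)%Z| = w x).
have hm0 : (0 <= (x %% (n.+1)%:Z)%Z) by rewrite modz_ge0.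
have hm1 : ((x %% (n.+1)%:Z)%Z < (n.+1)%:Z) by rewrite ltz_pmod.
rewrite (nth_map 0%N); last first.
  by rewrite size_iota -ltz_nat gez0_abs.
rewrite nth_iota; last by rewrite -ltz_nat gez0_abs.
rewrite add0n gez0_abs //.
rewrite {2}(divz_eq x (n.+1)%:Z) addrC per_int //.
Qed.

Definition orbit (w : Omega) : set Omega := [set v | exists k, v = sh k w].

Lemma orbit_sh j w : orbit (sh j w) = orbit w.
Proof.
apply/seteqP; split => v [k ->].
  by exists (k + j); rewrite shM.
by exists (k - j); rewrite shM subrK.
Qed.

Definition pick (A : set Omega) : Omega :=
  match pselect (exists v, A v) with
  | left h => projT1 (cid h)
  | right _ => fun _ => false end.

Lemma pickP A v : A v -> A (pick A).
Proof.
move=> Av; rewrite /pick; case: pselect => [h|[]]; last by exists v.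
exact: (projT2 (cid h)).
Qed.

Definition rep w := pick (orbit w).

Lemma rep_sh w : exists k, w = sh k (rep w).
Proof.
have [k hk] : orbit w (rep w).
  by apply: (@pickP (orbit w) w); exists 0; rewrite sh0.
by exists (- k); rewrite hk shM addNr sh0.
Qed.

Lemma uniq_k {w a b r} : ~ periodic w -> w = sh a r -> w = sh b r -> a = b.
Proof.
move=> np ha hb; apply/eqP; rewrite eq_sym -subr_eq0; apply/negP => /negP h.
apply: np; exists (b - a); split => //.
have hr : r = sh (- a) w by rewrite ha shM addNr sh0.
by rewrite {2}hb hr shM.
Qed.

Lemma periodic_tau w : periodic (tau w) <-> periodic w.
Proof.
rewrite tau_sh; split => [][k [k0 hk]]; exists k; split => //.
  by have := congr1 (sh (-1)) hk; rewrite !shM addrC addNKr addNr sh0.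
by rewrite shM addrC -shM hk.
Qed.

Definition X (w : Omega) : option int :=
  if pselect (periodic w) then None else
  match pselect (exists k, w = sh k (rep w)) with
  | left h => Some (projT1 (cid h))
  | right _ => None end.

Lemma XE {w k} : ~ periodic w -> w = sh k (rep w) -> X w = Some k.
Proof.
move=> np hk; rewrite /X; destruct (pselect (periodic w)) as [p|np0]; first by [].
destruct (pselect (exists k, w = sh k (rep w))) as [h|h]; last by case: h; exists k.
by congr Some; exact: (uniq_k np (projT2 (cid h)) hk).
Qed.

Theorem lemma3 :
  exists X : Omega -> option int,
    countable (X @^-1` [set Delta]) /\ (forall w : Omega, X (tau w) = T (X w)).
Proof.
exists X; split.
  apply: sub_countable periodic_countable; apply: subset_card_le => w /=.
  rewrite /X; destruct (pselect (periodic w)) as [p|np]; first by [].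
  destruct (pselect (exists k, w = sh k (rep w))) as [h|h]; first by [].
  by case: h; exact: rep_sh.
move=> w; case: (pselect (periodic w)) => p.
  have p' : periodic (tau w) by apply/periodic_tau.
  by rewrite /X; destruct (pselect (periodic w)); destruct (pselect (periodic (tau w))).
have [k hk] := rep_sh w.
rewrite (XE p hk) /=.
have np' : ~ periodic (tau w) by move/periodic_tau.
apply: XE => //.
by rewrite /rep tau_sh orbit_sh -/(rep w) {1}hk shM addrC.
Qed.
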